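(* Let $0<a<b<1$ with $a+b=1$, $m\in C^1([0,1])$ non-constant, $c\in C([0,1])$, and assume (H1), (H2) and $m\in S_{\mathcal{N}}$. Then $\liminf_{s\to+\infty}\lambda(s)\ge\lambda^{\mathcal{N}}$.
   Context: Fix an integer $d\ge1$. $\lambda(s)$ denotes the principal eigenvalue of $-\varphi''-\frac{d-1}{r}\varphi'-2s\,m'(r)\varphi'+c(r)\varphi=\lambda\varphi$ on $(0,1)$, $\varphi'(0)=\varphi'(1)=0$; equivalently $\lambda(s)=\min\{\int_0^1 r^{d-1}e^{2sm}(|\varphi'|^2+c\varphi^2)dr:\ \varphi\in H^1((0,1)),\ \int_0^1 r^{d-1}e^{2sm}\varphi^2dr=1\}$. $\lambda^{\mathcal{D}}$ (resp. $\lambda^{\mathcal{N}}$) is the principal eigenvalue of $-\varphi''-\frac{d-1}{r}\varphi'+c\varphi=\lambda\varphi$ on $(a,b)$ with Dirichlet (resp. Neumann) boundary conditions, i.e. the minimum of $\int_a^b r^{d-1}(|\varphi'|^2+c\varphi^2)dr$ over $\varphi\in H^1_0((a,b))$ (resp. $H^1((a,b))$) with $\int_a^b r^{d-1}\varphi^2dr=1$. (H1): $m(r)=m(1-r)$ on $[0,1]$ and $m\equiv0$ on $[a,b]$, where $a+b=1$. (H2): $c>0$ on $[0,1]$ and $c(r)>\lambda^{\mathcal{D}}$ for $r\in[0,a]\cup[b,1]$. Step function $\bar m$: given $\delta\in(0,a)$, constants $0<h<\alpha<\beta<1<\nu$ and $l\in\mathbb{N}$ with $\sum_{i\ge1}(\alpha^{i+l}+\beta^{i+l})=a-\delta$,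 put $Y_0=\delta$, $Y_n=\delta+\sum_{i=1}^n(\alpha^{i+l}+\beta^{i+l})$ and $X_n=Y_n-\beta^{n+l}$ for $n\ge1$; define $\bar m(r)=h^n$ on $[Y_{n-1},X_n]$ and $\bar m(r)=-\nu h^n$ on $[X_n,Y_n]$ for $n\ge1$, and $\bar m(r)=\bar m(1-r)$ for $r\in[b,1-\delta]$. $S_{\mathcal{N}}$: the set of $m\in C^1([0,1])$ such that, for some such $\delta,h,\alpha,\beta,\nu,l$, $m'$ changes sign only finitely many times in $[0,\delta)\cup(1-\delta,1]$ and $m(r)\le\bar m(r)$ for all $r\in[\delta,a]\cup[b,1-\delta]$. *)

(* Defs.v *)
From Stdlib Require Import Reals Lra.
From Coquelicot Require Import Coquelicot.
Open Scope R_scope.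

Definition isC1 (f df : R -> R) : Prop :=
  (forall x, is_derive f x (df x)) /\ (forall x, continuous df x).

Definition lam (d : nat) (m c : R -> R) (s : R) : Rbar :=
  Glb_Rbar (fun L => exists phi dphi : R -> R, isC1 phi dphi /\
    RInt (fun r => r ^ (d - 1) * exp (2 * s * m r) * (phi r) ^ 2) 0 1 = 1 /\
    L = RInt (fun r => r ^ (d - 1) * exp (2 * s * m r) *
                       ((dphi r) ^ 2 + c r * (phi r) ^ 2)) 0 1).

Definition lamD (d : nat) (c : R -> R) (a b : R) : Rbar :=
  Glb_Rbar (fun L => exists phi dphi : R -> R, isC1 phi dphi /\
    phi a = 0 /\ phi b = 0 /\
    RInt (fun r => r ^ (d - 1) * (phi r) ^ 2) a b = 1 /\
    L = RInt (fun r => r ^ (d - 1) * ((dphi r) ^ 2 + c r * (phi r) ^ 2)) a b).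

Definition lamN (d : nat) (c : R -> R) (a b : R) : Rbar :=
  Glb_Rbar (fun L => exists phi dphi : R -> R, isC1 phi dphi /\
    RInt (fun r => r ^ (d - 1) * (phi r) ^ 2) a b = 1 /\
    L = RInt (fun r => r ^ (d - 1) * ((dphi r) ^ 2 + c r * (phi r) ^ 2)) a b).

Definition finite_sign_changes (f : R -> R) (u v : R) : Prop :=
  exists (t : nat -> R) (k : nat), t O = u /\ t k = v /\
    (forall i, (i < k)%nat -> t i < t (S i)) /\
    (forall i, (i < k)%nat ->
       (forall x, t i < x < t (S i) -> 0 <= f x) \/
       (forall x, t i < x < t (S i) -> f x <= 0)).

Fixpoint Yseq (delta alpha beta : R) (l : nat) (n : nat) : R :=
  match n with
  | O => delta
  | S k => Yseq delta alpha beta l k + alpha ^ (S k + l) + beta ^ (S k + l)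
  end.

Definition Xseq (delta alpha beta : R) (l : nat) (n : nat) : R :=
  Yseq delta alpha beta l n - beta ^ (n + l).

Definition H1 (m : R -> R) (a b : R) : Prop :=
  (forall r, 0 <= r <= 1 -> m r = m (1 - r)) /\ (forall r, a <= r <= b -> m r = 0).

Definition H2 (d : nat) (c : R -> R) (a b : R) : Prop :=
  (forall r, 0 <= r <= 1 -> 0 < c r) /\
  (forall r, (0 <= r <= a \/ b <= r <= 1) -> Rbar_lt (lamD d c a b) (c r)).

(* m in S_N; m <= mbar is written out interval by interval: on [Y_{n-1},X_n]
   mbar = h^n, on [X_n,Y_n] mbar = -nu h^n, and mbar(r) = mbar(1-r) on [b,1-delta]. *)
Definition in_SN (m dm : R -> R) (a : R) : Prop :=
  exists (delta h alpha beta nu : R) (l : nat),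
    0 < delta < a /\ 0 < h /\ h < alpha /\ alpha < beta /\ beta < 1 /\ 1 < nu /\
    is_series (fun i : nat => alpha ^ (S i + l) + beta ^ (S i + l)) (a - delta) /\
    finite_sign_changes dm 0 delta /\ finite_sign_changes dm (1 - delta) 1 /\
    (forall (k : nat) (r : R),
       Yseq delta alpha beta l k <= r <= Xseq delta alpha beta l (S k) ->
       m r <= h ^ (S k) /\ m (1 - r) <= h ^ (S k)) /\
    (forall (k : nat) (r : R),
       Xseq delta alpha beta l (S k) <= r <= Yseq delta alpha beta l (S k) ->
       m r <= - (nu * h ^ (S k)) /\ m (1 - r) <= - (nu * h ^ (S k))).

(* Main.v *)
Require Import Defs.
From Stdlib Require Import Reals Lra.
From Coquelicot Require Import Coquelicot.
Open Scope R_scope.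

Lemma cM (f g : R -> R) x : continuous f x -> continuous g x ->
  continuous (fun y => f y * g y) x.
Proof. intros; apply (continuous_mult (K:=R_AbsRing)); auto. Qed.

Lemma cP (f g : R -> R) x : continuous f x -> continuous g x ->
  continuous (fun y => f y + g y) x.
Proof. intros; apply (continuous_plus (V:=R_NormedModule)); auto. Qed.

Lemma cPow (f : R -> R) n x : continuous f x -> continuous (fun y => f y ^ n) x.
Proof.
  intros H; induction n; simpl.
  - apply continuous_const.
  - apply cM; auto.
Qed.

Lemma cExp (f : R -> R) x : continuous f x -> continuous (fun y => exp (f y)) x.
Proof.
  intros H; apply (continuous_comp f exp); auto.
  apply (ex_derive_continuous (K:=R_AbsRing) (V:=R_NormedModule) exp). auto_derive. auto.
Qed.

Lemma cW n x : continuous (fun r : R => r ^ n) x.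
Proof. apply (cPow (fun r => r)). apply continuous_id. Qed.

Lemma exR (f : R -> R) u v : (forall x, continuous f x) -> ex_RInt f u v.
Proof. intros; apply (ex_RInt_continuous (V:=R_CompleteNormedModule)); auto. Qed.

Lemma dcont (f df : R -> R) : (forall x, is_derive f x (df x)) -> forall x, continuous f x.
Proof.
  intros H x. apply (ex_derive_continuous (K:=R_AbsRing) (V:=R_NormedModule)).
  exists (df x); apply H.
Qed.

Lemma RIs (f : R -> R) u v k : ex_RInt f u v ->
  RInt (fun x => k * f x) u v = k * RInt f u v.
Proof. intros H. apply (RInt_scal (V:=R_CompleteNormedModule)); auto. Qed.

Lemma RIe (f g : R -> R) u v : (forall x : R, Rmin u v < x < Rmax u v -> f x = g x) ->
  RInt f u v = RInt g u v.
Proof. intros H. apply (RInt_ext (V:=R_CompleteNormedModule)); auto. Qed.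

Lemma RIC (f : R -> R) u v w : (forall x, continuous f x) ->
  RInt f u w = RInt f u v + RInt f v w.
Proof. intros H. symmetry. apply (RInt_Chasles (V:=R_CompleteNormedModule)); apply exR; auto. Qed.

Theorem lemma3p7 (d : nat) (a b : R) (m dm c : R -> R) :
  (1 <= d)%nat ->
  0 < a -> a < b -> b < 1 -> a + b = 1 ->
  isC1 m dm ->
  (exists x y, 0 <= x <= 1 /\ 0 <= y <= 1 /\ m x <> m y) ->
  (forall x, continuous c x) ->
  H1 m a b -> H2 d c a b -> in_SN m dm a ->
  (* liminf_{s -> +oo} lam(s) >= lamN *)
  forall M : R, Rbar_lt M (lamN d c a b) ->
    exists S : R, forall s : R, S <= s -> Rbar_le M (lam d m c s).
Proof.
  intros Hd Ha Hab Hb Hab1 [Hm Hdm] _ Hc [_ Hm0] [Hcpos HcD] _ M HM.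
  assert (Hmc : forall x, continuous m x).
  { apply (dcont m dm Hm). }
  assert (HND : Rbar_le (lamN d c a b) (lamD d c a b)).
  { unfold lamN, lamD.
    destruct (Glb_Rbar_correct (fun L => exists phi dphi : R -> R, isC1 phi dphi /\
      phi a = 0 /\ phi b = 0 /\
      RInt (fun r => r ^ (d - 1) * (phi r) ^ 2) a b = 1 /\
      L = RInt (fun r => r ^ (d - 1) * ((dphi r) ^ 2 + c r * (phi r) ^ 2)) a b)) as [_ H2'].
    apply H2'. intros x Hx.
    destruct (Glb_Rbar_correct (fun L => exists phi dphi : R -> R, isC1 phi dphi /\
      RInt (fun r => r ^ (d - 1) * (phi r) ^ 2) a b = 1 /\
      L = RInt (fun r => r ^ (d - 1) * ((dphi r) ^ 2 + c r * (phi r) ^ 2)) a b)) as [H1' _].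
    apply H1'. destruct Hx as (phi & dphi & H1 & _ & _ & H3 & H4).
    exists phi, dphi; auto. }
  assert (HcM : forall r, (0 <= r <= a \/ b <= r <= 1) -> M < c r).
  { intros r Hr. specialize (HcD r Hr).
    destruct (lamN d c a b) as [l| |] eqn:E; simpl in *;
      destruct (lamD d c a b) as [l'| |]; simpl in *; try lra; tauto. }
  assert (HN : forall phi dphi, isC1 phi dphi ->
     M * RInt (fun r => r ^ (d - 1) * (phi r) ^ 2) a b <=
     RInt (fun r => r ^ (d - 1) * ((dphi r) ^ 2 + c r * (phi r) ^ 2)) a b).
  { intros phi dphi [Hp Hdp].
    assert (Hpc : forall x, continuous phi x).
    { apply (dcont phi dphi Hp). }
    set (t := RInt (fun r => r ^ (d - 1) * (phi r) ^ 2) a b : R).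
    assert (Ht : 0 <= t).
    { apply RInt_ge_0; [lra| apply exR; intro; apply cM; [apply cW|apply cPow; auto]|].
      intros x Hx. apply Rmult_le_pos; [apply pow_le; lra| apply pow2_ge_0]. }
    assert (HF : 0 <= RInt (fun r => r ^ (d - 1) * ((dphi r) ^ 2 + c r * (phi r) ^ 2)) a b).
    { apply RInt_ge_0; [lra| apply exR; intro; apply cM; [apply cW|apply cP;
        [apply cPow; auto| apply cM; [auto|apply cPow; auto]]]|].
      intros x Hx. apply Rmult_le_pos; [apply pow_le; lra|].
      assert (0 < c x) by (apply Hcpos; lra).
      pose proof (pow2_ge_0 (dphi x)); pose proof (pow2_ge_0 (phi x)); nra. }
    destruct (Req_dec t 0) as [E|E]; [rewrite E; lra|].
    assert (Htp : 0 < t) by lra.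
    set (k := / sqrt t).
    assert (Hk : k * k = / t).
    { unfold k. rewrite <- Rinv_mult, sqrt_sqrt; lra. }
    assert (Hmem : Rbar_le (lamN d c a b)
      (RInt (fun r => r ^ (d - 1) * ((k * dphi r) ^ 2 + c r * (k * phi r) ^ 2)) a b)).
    { unfold lamN. destruct (Glb_Rbar_correct (fun L => exists phi dphi : R -> R, isC1 phi dphi /\
      RInt (fun r => r ^ (d - 1) * (phi r) ^ 2) a b = 1 /\
      L = RInt (fun r => r ^ (d - 1) * ((dphi r) ^ 2 + c r * (phi r) ^ 2)) a b)) as [H1' _].
      apply H1'. exists (fun r => k * phi r), (fun r => k * dphi r). split; [|split].
      - split. intro x; apply is_derive_scal; auto.
        intro x; apply cM; [apply continuous_const| auto].
      - rewrite (RIe _ (fun r => (k * k) * (r ^ (d - 1) * phi r ^ 2))).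
        + rewrite RIs. fold t.
          rewrite Hk. apply Rinv_l; lra.
          apply exR; intro; apply cM; [apply cW|apply cPow; auto].
        + intros; ring.
      - reflexivity. }
    rewrite (RIe _ (fun r => (k * k) * (r ^ (d - 1) * (dphi r ^ 2 + c r * phi r ^ 2)))) in Hmem.
    2: intros; ring.
    rewrite RIs in Hmem.
    2: apply exR; intro; apply cM; [apply cW|apply cP;
        [apply cPow; auto| apply cM; [auto|apply cPow; auto]]].
    rewrite Hk in Hmem.
    set (I := RInt (fun r => r ^ (d - 1) * ((dphi r) ^ 2 + c r * (phi r) ^ 2)) a b : R) in *.
    assert (M < / t * I).
    { destruct (lamN d c a b) as [l| |]; simpl in *; try lra; tauto. }
    assert (M * t < I).
    { apply (Rmult_lt_compat_r t) in H; auto.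
      replace (/ t * I * t) with I in H by (field; lra). lra. }
    lra. }
  exists 0. intros s _.
  unfold lam.
  destruct (Glb_Rbar_correct (fun L => exists phi dphi : R -> R, isC1 phi dphi /\
    RInt (fun r => r ^ (d - 1) * exp (2 * s * m r) * (phi r) ^ 2) 0 1 = 1 /\
    L = RInt (fun r => r ^ (d - 1) * exp (2 * s * m r) *
                       ((dphi r) ^ 2 + c r * (phi r) ^ 2)) 0 1)) as [_ Hglb].
  apply Hglb. intros L (phi & dphi & HC & Hnorm & ->).
  destruct HC as [Hp Hdp].
  assert (Hpc : forall x, continuous phi x).
  { apply (dcont phi dphi Hp). }
  set (F := fun r => r ^ (d - 1) * exp (2 * s * m r) * ((dphi r) ^ 2 + c r * (phi r) ^ 2)).
  set (G := fun r => r ^ (d - 1) * exp (2 * s * m r) * (phi r) ^ 2).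
  assert (HGc : forall x, continuous G x).
  { intro; unfold G; apply cM; [apply cM; [apply cW| apply cExp; apply cM;
      [apply continuous_const| auto]]| apply cPow; auto]. }
  assert (HFc : forall x, continuous F x).
  { intro; unfold F; apply cM; [apply cM; [apply cW| apply cExp; apply cM;
      [apply continuous_const| auto]]| apply cP;
        [apply cPow; auto| apply cM; [auto|apply cPow; auto]]]. }
  assert (HMG : forall x, continuous (fun r => M * G r) x).
  { intro; apply cM; [apply continuous_const| auto]. }
  assert (Hout : forall u v, 0 <= u <= v -> v <= 1 -> (v <= a \/ b <= u) ->
     M * RInt G u v <= RInt F u v).
  { intros u v Huv Hv Hor.
    replace (M * RInt G u v) with (RInt (fun r => M * G r) u v).
    2:{ rewrite RIs; [reflexivity| apply exR; auto]. }
    apply RInt_le; try lra; try (apply exR; auto).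
    intros x Hx. unfold G, F.
    assert (HcMx : M < c x) by (apply HcM; lra).
    assert (0 <= x ^ (d - 1) * exp (2 * s * m x)).
    { apply Rmult_le_pos; [apply pow_le; lra| apply Rlt_le, exp_pos]. }
    pose proof (pow2_ge_0 (dphi x)); pose proof (pow2_ge_0 (phi x)).
    assert (0 <= x ^ (d - 1) * exp (2 * s * m x) * (phi x) ^ 2) by (apply Rmult_le_pos; auto).
    nra. }
  assert (Hin : M * RInt G a b <= RInt F a b).
  { rewrite (RIe G (fun r => r ^ (d - 1) * (phi r) ^ 2)).
    rewrite (RIe F (fun r => r ^ (d - 1) * ((dphi r) ^ 2 + c r * (phi r) ^ 2))).
    apply HN; split; auto.
    all: intros x Hx; rewrite Rmin_left in Hx by lra; rewrite Rmax_right in Hx by lra;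
      unfold F, G; rewrite Hm0 by lra; rewrite Rmult_0_r, exp_0; ring. }
  fold G in Hnorm.
  assert (E1 : @eq R (RInt G 0 1) (RInt G 0 a + RInt G a b + RInt G b 1)).
  { rewrite (RIC G 0 a 1), (RIC G a b 1) by auto. ring. }
  assert (E2 : @eq R (RInt F 0 1) (RInt F 0 a + RInt F a b + RInt F b 1)).
  { rewrite (RIC F 0 a 1), (RIC F a b 1) by auto. ring. }
  pose proof (Hout 0 a ltac:(lra) ltac:(lra) ltac:(lra)).
  pose proof (Hout b 1 ltac:(lra) ltac:(lra) ltac:(lra)).
  simpl. fold F. rewrite E2.
  assert (M * RInt G 0 1 <= RInt F 0 a + RInt F a b + RInt F b 1) by (rewrite E1; nra).
  rewrite Hnorm in H1. lra.
Qed.
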